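(* For every message $M$ and formula $\phi$: $\vdash[M][M]\phi\leftrightarrow[M]\phi$.
   Context: Fix a finite set $\mathcal{A}$ of agent names containing a distinguished name $\mathsf{CM}$. Messages: $M ::= a \mid B \mid (M,M)$ ($a\in\mathcal{A}$, $B$ optional data constants, pairs). $\mathcal{P}$ is a denumerable set of propositional variables containing atoms $\mathsf{k}_a(M)$ (''$a$ knows $M$''). Formulas: $\phi ::= P \mid \phi\wedge\phi \mid \phi\vee\phi \mid \neg\phi \mid \phi\to\phi \mid [M]\phi$. Abbreviations: $\mathrm{true}:=\mathsf{k}_{\mathsf{CM}}(\mathsf{CM})$, $\mathrm{false}:=\neg\mathrm{true}$, $\phi\leftrightarrow\psi:=(\phi\to\psi)\wedge(\psi\to\phi)$, $\langle M\rangle\phi:=\neg\neg(\mathsf{k}_{\mathsf{CM}}(M)\wedge\phi)$. LIiP is the smallest set of formulas containing all instances of: the axioms of an adequate Hilbert axiomatization of intuitionistic propositional logic; $\mathsf{k}_a(a)$; $(\mathsf{k}_a(M)\wedge\mathsf{k}_a(M'))\leftrightarrow\mathsf{k}_a((M,M'))$; $[M]\mathsf{k}_{\mathsf{CM}}(M)$; $[M](\phi\to\psi)\to([M]\phi\to[M]\psi)$; $[M]\phi\to(\mathsf{k}_{\mathsf{CM}}(M)\to\phi)$; $[M]\phi\to\langle M\rangle\phi$; $\phi\to[M]\phi$; and closed under modus ponens and the rule: if $\mathsf{k}_{\mathsf{CM}}(M)\to\mathsf{k}_{\mathsf{CM}}(M')$ is in the set then so is $[M']\phi\to[M]\phi$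 for every $\phi$. Write $\vdash\phi$ for $\phi\in\mathrm{LIiP}$. *)

(* Defs.v *)
From Stdlib Require Import List.
Set Implicit Arguments.

Section LIiP.
(* A : agent names, cm : the distinguished name CM, D : data constants. *)
Variable A : Type.
Variable cm : A.
Variable D : Type.

Inductive msg : Type :=
| MAg : A -> msg
| MData : D -> msg
| MPair : msg -> msg -> msg.

(* Propositional variables: the atoms k_a(M), plus denumerably many others. *)
Inductive pvar : Type :=
| PK : A -> msg -> pvar
| PV : nat -> pvar.

Inductive form : Type :=
| FVar : pvar -> form
| FAnd : form -> form -> form
| FOr : form -> form -> form
| FNot : form -> form
| FImp : form -> form -> form
| FBox : msg -> form -> form.

Definition K (a : A) (M : msg) : form := FVar (PK a M).
Definition FTrue : form := K cm (MAg cm).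
Definition FFalse : form := FNot FTrue.
Definition FIff (p q : form) : form := FAnd (FImp p q) (FImp q p).
Definition FDia (M : msg) (p : form) : form := FNot (FNot (FAnd (K cm M) p)).

(* Intuitionistic
   propositional logic is axiomatized by Kleene's Hilbert system (with
   primitive negation). *)
Inductive LIiP : form -> Prop :=
| ax_K : forall p q, LIiP (FImp p (FImp q p))
| ax_S : forall p q r,
    LIiP (FImp (FImp p (FImp q r)) (FImp (FImp p q) (FImp p r)))
| ax_andE1 : forall p q, LIiP (FImp (FAnd p q) p)
| ax_andE2 : forall p q, LIiP (FImp (FAnd p q) q)
| ax_andI : forall p q, LIiP (FImp p (FImp q (FAnd p q)))
| ax_orI1 : forall p q, LIiP (FImp p (FOr p q))
| ax_orI2 : forall p q, LIiP (FImp q (FOr p q))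
| ax_orE : forall p q r,
    LIiP (FImp (FImp p r) (FImp (FImp q r) (FImp (FOr p q) r)))
| ax_negI : forall p q,
    LIiP (FImp (FImp p q) (FImp (FImp p (FNot q)) (FNot p)))
| ax_negE : forall p q, LIiP (FImp (FNot p) (FImp p q))
| ax_self : forall a, LIiP (K a (MAg a))
| ax_pair : forall a M M',
    LIiP (FIff (FAnd (K a M) (K a M')) (K a (MPair M M')))
| ax_boxK_CM : forall M, LIiP (FBox M (K cm M))
| ax_boxK : forall M p q,
    LIiP (FImp (FBox M (FImp p q)) (FImp (FBox M p) (FBox M q)))
| ax_boxT : forall M p, LIiP (FImp (FBox M p) (FImp (K cm M) p))
| ax_boxD : forall M p, LIiP (FImp (FBox M p) (FDia M p))
| ax_box4 : forall M p, LIiP (FImp p (FBox M p))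
| rule_mp : forall p q, LIiP (FImp p q) -> LIiP p -> LIiP q
| rule_anti : forall M M' p,
    LIiP (FImp (K cm M) (K cm M')) -> LIiP (FImp (FBox M' p) (FBox M p)).

End LIiP.

(* Main.v *)
Require Import Defs.
From Stdlib Require Import List.

Section H.
Variables (A : Type) (cm : A) (D : Type).
Notation L := (@LIiP A cm D).

Lemma mp' p q : L (FImp p q) -> L p -> L q.
Proof. intros; eapply rule_mp; eauto. Qed.

Lemma weak p q : L q -> L (FImp p q).
Proof. intros H. eapply mp'. apply ax_K. exact H. Qed.

Lemma trans p q r : L (FImp p q) -> L (FImp q r) -> L (FImp p r).
Proof.
  intros H1 H2. eapply mp'. eapply mp'. apply ax_S. apply weak. exact H2. exact H1.
Qed.

Lemma discharge x y z : L (FImp x (FImp y z)) -> L y -> L (FImp x z).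
Proof.
  intros H1 H2. eapply mp'. eapply mp'. apply ax_S. exact H1. apply weak; exact H2.
Qed.

Lemma boxmono M p q : L (FImp p q) -> L (FImp (FBox M p) (FBox M q)).
Proof.
  intros H. eapply mp'. apply ax_boxK. eapply mp'. apply ax_box4. exact H.
Qed.
End H.

Theorem theorem2p36 (A : Type) (cm : A) (D : Type)
  (A_finite : exists l : list A, forall a : A, In a l)
  (M : msg A D) (phi : form A D) :
  LIiP cm (FIff (FBox M (FBox M phi)) (FBox M phi)).
Proof.
  unfold FIff. eapply mp'. eapply mp'. apply ax_andI.
  - eapply trans. apply boxmono. apply ax_boxT.
    eapply discharge. apply ax_boxK. apply ax_boxK_CM.
  - apply ax_box4.
Qed.
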